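(* Let $I=\{i_1<i_2<\dots<i_\ell\}$ be a nonempty finite set of positive integers with $m=i_\ell$. For $1\le k\le \ell$ define $$I_k=\{i_1,\dots,i_{k-1},\,i_k-1,\dots,i_\ell-1\}\setminus\{0\},\qquad \hat I_k=\{i_1,\dots,i_{k-1},\,i_{k+1}-1,\dots,i_\ell-1\},$$ let $I'=\{i_k\in I\mid i_k-1\notin I\}$ and $I''=I'\setminus\{1\}$. Then for all integers $n>m$, $$d(I;n+1)=d(I;n)+\sum_{k:\, i_k\in I''} d(I_k;n)+\sum_{k:\, i_k\in I'} d(\hat I_k;n).$$
   Context: For a permutation $\pi=\pi_1\cdots\pi_n$ of $[n]$, $\mathrm{Des}\,\pi=\{i\mid \pi_i>\pi_{i+1}\}$. For a finite set $J$ of positive integers and $n>\max(J\cup\{0\})$, $d(J;n)=\#\{\pi\in\mathfrak S_n\mid \mathrm{Des}\,\pi=J\}$. *)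

(* Defs.v *)
From mathcomp Require Import all_boot all_order all_fingroup.
Set Implicit Arguments. Unset Strict Implicit. Unset Printing Implicit Defensive.

(* One-line notation of s : 'S_n as a sequence (values 0..n-1, i.e. pi_j - 1;
   relative order identical to the paper's pi_1 ... pi_n). *)
Definition oneline n (s : 'S_n) : seq nat := [seq val (s j) | j <- enum 'I_n].

(* i (1-based position, 1 <= i <= n-1) is a descent of s: pi_i > pi_{i+1}. *)
Definition is_des n (s : 'S_n) (i : nat) : bool :=
  (0 < i < n) && (nth 0 (oneline s) i < nth 0 (oneline s) i.-1).

Definition d (J : seq nat) (n : nat) : nat :=
  #|[set s : 'S_n | all (fun j => j < n) J &&
                    [forall i : 'I_n, (val i \in J) == is_des s i]]|.

(* With k 0-based (k = paper's k - 1), i_{k+1} = nth 0 I k. *)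
Definition Ik (I : seq nat) (k : nat) : seq nat :=
  [seq x <- take k I ++ map predn (drop k I) | x != 0].
Definition Ihat (I : seq nat) (k : nat) : seq nat :=
  take k I ++ map predn (drop k.+1 I).
Definition Iprime (I : seq nat) : seq nat := [seq x <- I | x.-1 \notin I].

(* Main.v *)
Require Import Defs.
From mathcomp Require Import all_boot all_order all_fingroup.
From mathcomp Require Import zify.
Set Implicit Arguments. Unset Strict Implicit. Unset Printing Implicit Defensive.

Definition desS (N : nat) (s : seq nat) (i : nat) : bool :=
  (0 < i < N) && (nth 0 s i < nth 0 s i.-1).
Definition okS (J : seq nat) (N : nat) (s : seq nat) : bool :=
  all (fun j => j < N) J && all (fun i => (i \in J) == desS N s i) (iota 0 N).
Definition Perm n := permutations (iota 0 n).

Lemma oneline_inj n : injective (@oneline n).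
Proof.
move=> s t H; apply/permP => j; apply: val_inj.
have := congr1 (fun x => nth 0 x j) H; rewrite /oneline.
rewrite (nth_map j); last by rewrite size_enum_ord.
rewrite (nth_map j); last by rewrite size_enum_ord.
by rewrite nth_ord_enum.
Qed.

Lemma oneline_perm n (s : 'S_n) : perm_eq (oneline s) (iota 0 n).
Proof.
rewrite /oneline -val_enum_ord.
have -> : [seq val (s j) | j <- enum 'I_n] = map val (map s (enum 'I_n)) by elim: (enum 'I_n) => //= x l ->.
apply: perm_map.
apply: uniq_perm; first by rewrite map_inj_uniq ?enum_uniq //; apply: perm_inj.
  exact: enum_uniq.
move=> x; rewrite mem_enum inE; apply/mapP; exists (s^-1 x)%g; first by rewrite mem_enum.
by rewrite permKV.
Qed.

Lemma forall_iota n (p : pred nat) : [forall i : 'I_n, p (val i)] = all p (iota 0 n).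
Proof.
rewrite -val_enum_ord all_map; apply/forallP/allP => H i //.
by move=> _; apply: H.
by apply: H; rewrite mem_enum.
Qed.

Lemma dE J n : d J n = count (okS J n) (Perm n).
Proof.
have pe : perm_eq (map (@oneline n) (enum 'S_n)) (Perm n).
  have U : uniq (map (@oneline n) (enum 'S_n)).
    by rewrite map_inj_uniq ?enum_uniq //; apply: oneline_inj.
  apply: uniq_perm => //; first exact: permutations_uniq.
  apply: (uniq_min_size U _ _).2.
  - move=> x /mapP [s _ ->]; rewrite mem_permutations; exact: oneline_perm.
  by rewrite size_map -cardE card_Sn size_permutations ?iota_uniq // size_iota.
rewrite /d -(seq.permP pe) count_map cardsE cardE /enum_mem size_filter.
rewrite count_filter; apply: eq_count => s; rewrite /= /okS [s \in _]unfold_in /= andbT; congr (_ && _); exact: (forall_iota n (fun i => (i \in J) == desS n (oneline s) i)).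
Qed.

Definition ins (q x : nat) (s : seq nat) := take q s ++ x :: drop q s.
Definition del (q : nat) (s : seq nat) := take q s ++ drop q.+1 s.

Lemma ins_perm q x s : perm_eq (ins q x s) (x :: s).
Proof.
rewrite /ins -cat1s perm_catCA /= -{3}(cat_take_drop q s) //.
Qed.

Lemma iotaSr n : iota 0 n.+1 = iota 0 n ++ [:: n].
Proof. by rewrite -addn1 iotaD. Qed.

Lemma perm_ext n s : perm_eq (n :: s) (iota 0 n.+1) = perm_eq s (iota 0 n).
Proof.
have h : perm_eq (iota 0 n ++ [:: n]) (n :: iota 0 n) by rewrite perm_catC.
by rewrite iotaSr (permPr h) perm_cons.
Qed.

Lemma count_bij (s t : seq (seq nat)) (f g : seq nat -> seq nat) (P Q : pred (seq nat)) :
  uniq s -> uniq t ->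
  (forall y, y \in t -> (f y \in s) && Q (f y)) ->
  {in t &, injective f} ->
  (forall x, x \in s -> Q x -> (g x \in t) && (f (g x) == x)) ->
  count (fun x => P x && Q x) s = count (fun y => P (f y)) t.
Proof.
move=> us ut H1 H2 H3.
rewrite -count_map -count_filter; apply/seq.permP.
apply: uniq_perm; first by rewrite filter_uniq.
  by rewrite map_inj_in_uniq.
move=> x; rewrite mem_filter; apply/idP/mapP.
  case/andP => Qx xs; have /andP [gt /eqP fg] := H3 x xs Qx.
  by exists (g x).
by case=> y yt ->; have /andP [-> ->] := H1 y yt.
Qed.

Lemma count_split_idx (s : seq (seq nat)) (P : pred (seq nat)) (f : seq nat -> nat) N :
  (forall x, x \in s -> f x < N) ->
  count P s = \sum_(q < N) count (fun x => P x && (f x == q)) s.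
Proof.
elim: s => [|a s IH] H /=; first by rewrite big1.
rewrite big_split /= -IH; last by move=> x xs; apply: H; rewrite inE xs orbT.
congr (_ + _).
have Ha : f a < N by apply: H; rewrite inE eqxx.
rewrite (bigD1 (Ordinal Ha)) //= eqxx andbT big1 ?addn0 // => i /negbTE ne.
suff -> : (f a == i) = false by rewrite andbF.
apply/negbTE; apply: contraFN ne => /eqP e; apply/eqP/val_inj; done.
Qed.

Lemma del_ins q x s : q <= size s -> del q (ins q x s) = s.
Proof.
move=> hq; rewrite /del /ins take_cat drop_cat size_takel // ltnn subnn take0 cats0.
rewrite ltnNge leqnSn /= subSn // subnn /= drop0.
exact: cat_take_drop.
Qed.

Lemma ins_del x s : x \in s -> ins (index x s) x (del (index x s) s) = s.
Proof.
move=> xs; have hi : index x s < size s by rewrite index_mem.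
rewrite /del /ins take_cat drop_cat size_takel ?ltnn ?subnn ?take0 ?cats0 ?drop0; last exact: ltnW.
by rewrite -[RHS](cat_take_drop (index x s)) (drop_nth x) // nth_index.
Qed.

Lemma count_ins P n :
  count P (Perm n.+1) = \sum_(q < n.+1) count (fun s => P (ins q n s)) (Perm n).
Proof.
rewrite (@count_split_idx _ _ (index n) n.+1); last first.
  move=> x; rewrite mem_permutations => pm.
  have := perm_size pm. rewrite size_iota => <-. by rewrite index_mem (perm_mem pm n) mem_iota add0n ltnSn.
apply: eq_bigr => q _.
apply: (@count_bij _ _ _ (del q)); rewrite ?permutations_uniq //.
- move=> y; rewrite mem_permutations => pm.
  rewrite mem_permutations (permPl (ins_perm q n y)) perm_ext pm /=.
  have sy : size y = n by rewrite (perm_size pm) size_iota.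
  have ny : n \notin y by rewrite (perm_mem pm n) mem_iota add0n ltnn andbF.
  have hq : q <= size y by rewrite sy -ltnS.
  rewrite /ins index_cat size_takel //.
  have -> : (n \in take q y) = false by apply/negbTE; apply: contra ny; apply: mem_take.
  by rewrite /= eqxx addn0.
- move=> y1 y2; rewrite !mem_permutations => p1 p2 e.
  have h1 : q <= size y1 by rewrite (perm_size p1) size_iota -ltnS.
  have h2 : q <= size y2 by rewrite (perm_size p2) size_iota -ltnS.
  by rewrite -(@del_ins q n y1) // e del_ins.
- move=> x; rewrite mem_permutations => pm /eqP <-.
  have nx : n \in x by rewrite (perm_mem pm n) mem_iota add0n ltnSn.
  rewrite ins_del // eqxx andbT mem_permutations -perm_ext.
  by rewrite -(permPl (ins_perm (index n x) n _)) ins_del.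
Qed.

Lemma nth_ins q x s j : q <= size s ->
  nth 0 (ins q x s) j = if j < q then nth 0 s j else if j == q then x else nth 0 s j.-1.
Proof.
move=> hq; rewrite /ins nth_cat size_takel //.
case: ltnP => hj; first by rewrite nth_take.
case: (eqVneq j q) => [->|ne]; first by rewrite subnn.
have -> : j - q = (j.-1 - q).+1 by lia.
by rewrite /= nth_drop; congr nth; lia.
Qed.

Lemma des_ins n q s i : size s = n -> all (fun v => v < n) s -> q <= n -> i <= n ->
  desS n.+1 (ins q n s) i =
  if i < q then desS n s i else if i == q then false
  else if i == q.+1 then true else desS n s i.-1.
Proof.
move=> sz /allP al hq hi.
have vl : forall j, j < n -> nth 0 s j < n.
  by move=> j hj; apply: al; apply: mem_nth; rewrite sz.
have hq' : q <= size s by rewrite sz.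
rewrite /desS !nth_ins //.
case: (ltnP i q) => hiq.
  have -> : i.-1 < q by lia.
  have -> : i < n.+1 by lia.
  by have -> : i < n by lia.
case: (eqVneq i q) => [eiq|ne].
  subst i.
  case: q hq hq' hiq hi => [|q] //= hq hq' _ _.
  rewrite ltnSn /=; have := vl q hq; lia.
case: (eqVneq i q.+1) => [ei|ne2].
  subst i; rewrite ?eqxx /= ?ltnn ?eqxx /=.
  have := vl q; lia.
have -> : (i.-1 < q) = false by lia.
have -> : (i.-1 == q) = false by apply/eqP; lia.
by congr (_ && _); lia.
Qed.

Definition X (I : seq nat) (n q : nat) (s : seq nat) :=
  all (fun i => (i == q) || ((if i < q then i \in I else i.+1 \in I) == desS n s i)) (iota 0 n).

Lemma claimA I n q s : all (fun j => j < n) I -> size s = n -> all (fun v => v < n) s -> q < n ->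
  okS I n.+1 (ins q n s) = [&& q.+1 \in I, q \notin I & X I n q s].
Proof.
move=> hI sz hs hq; rewrite /okS.
have -> : all (fun j => j < n.+1) I.
  by apply/allP => j /(allP hI) h; apply: ltnW.
rewrite andTb /X.
have D : forall i, i \in iota 0 n.+1 -> desS n.+1 (ins q n s) i =
  if i < q then desS n s i else if i == q then false
  else if i == q.+1 then true else desS n s i.-1.
  by move=> i; rewrite mem_iota => /andP [_ hi]; apply: des_ins => //; lia.
apply/allP/and3P.
  move=> H; split.
  - have mq : q.+1 \in iota 0 n.+1 by rewrite mem_iota; lia.
    have := H _ mq; rewrite D //.
    have -> : (q.+1 < q) = false by lia.
    have -> : (q.+1 == q) = false by apply/eqP; lia.
    by rewrite eqxx => /eqP ->.
  - have mq : q \in iota 0 n.+1 by rewrite mem_iota; lia.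
    have := H _ mq; rewrite D // ltnn eqxx.
    by move=> /eqP ->.
  apply/allP => i; rewrite mem_iota /= => hi.
  case: (eqVneq i q) => //= ne.
  case: (ltnP i q) => hiq.
    have mi : i \in iota 0 n.+1 by rewrite mem_iota; lia.
    by have := H _ mi; rewrite D // hiq.
  have mi : i.+1 \in iota 0 n.+1 by rewrite mem_iota; lia.
  have := H _ mi; rewrite D //.
  have -> : (i.+1 < q) = false by lia.
  have -> : (i.+1 == q) = false by apply/eqP; lia.
  have -> : (i.+1 == q.+1) = false by apply/eqP; lia.
  done.
move=> [h1 h2 /allP h3] i hi; rewrite D //.
move: hi; rewrite mem_iota /= => hi.
case: (ltnP i q) => hiq.
  have ne : (i == q) = false by apply/eqP; lia.
  by have := h3 i; rewrite mem_iota hiq ne /=; apply; lia.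
case: (eqVneq i q) => [->|ne]; first by rewrite ?ltnn ?eqxx (negbTE h2).
case: (eqVneq i q.+1) => [->|ne2]; first by rewrite ?ltnNge ?leqnSn /= ?eqxx h1.
have := h3 i.-1; rewrite mem_iota.
have -> : (i.-1 == q) = false by apply/eqP; lia.
have -> : (i.-1 < q) = false by lia.
have -> : i.-1.+1 = i by lia.
by rewrite /=; apply; lia.
Qed.

Lemma idx_lt I y x : sorted ltn I -> y \in I -> x \in I ->
  (index y I < index x I) = (y < x).
Proof.
move=> so yI xI.
case: (ltngtP (index y I) (index x I)) => h.
- by rewrite (sorted_ltn_index ltn_trans so _ _ yI xI h).
- by have := sorted_ltn_index ltn_trans so _ _ xI yI h => hxy; apply/esym/negbTE; rewrite -leqNgt ltnW.
- have : nth 0 I (index y I) = nth 0 I (index x I) by rewrite h.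
  by rewrite !nth_index // => ->; rewrite ltnn.
Qed.

Lemma mem_take_idx I x y : sorted ltn I -> x \in I ->
  (y \in take (index x I) I) = (y \in I) && (y < x).
Proof.
move=> so xI; case yI: (y \in I) => /=.
  by rewrite in_take // idx_lt.
by apply/negbTE; apply: contraFN yI; apply: mem_take.
Qed.

Lemma mem_drop_idx I x y : sorted ltn I -> x \in I ->
  (y \in drop (index x I).+1 I) = (y \in I) && (x < y).
Proof.
move=> so xI; case yI: (y \in I) => /=; last first.
  by apply/negbTE; apply: contraFN yI; apply: mem_drop.
have u : uniq I by apply: (sorted_uniq ltn_trans ltnn).
have E : (y \in drop (index x I).+1 I) = ~~ (y \in take (index x I).+1 I).
  move: u yI; rewrite -{1 2}(cat_take_drop (index x I).+1 I) cat_uniq mem_cat.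
  move=> /and3P [_ /hasPn hd _] yI.
  apply/idP/idP => [/hd //|nt]; by move: yI; rewrite (negbTE nt).
by rewrite E in_take // ltnS -ltnNge idx_lt.
Qed.

Lemma drop_idx (I : seq nat) x : x \in I -> drop (index x I) I = x :: drop (index x I).+1 I.
Proof. by move=> xI; rewrite (drop_nth 0) ?index_mem // nth_index. Qed.

Lemma mem_predn D i : 0 \notin D -> (i \in map predn D) = (i.+1 \in D).
Proof.
move=> D0; apply/mapP/idP => [[y yD ->]|h]; last by exists i.+1.
have : y != 0 by apply: contra D0 => /eqP <-.
by case: y yD.
Qed.

Lemma memIhat I q i : sorted ltn I -> 0 \notin I -> q.+1 \in I -> q \notin I ->
  (i \in Ihat I (index q.+1 I)) = if i < q then i \in I else if i == q then false else i.+1 \in I.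
Proof.
move=> so I0 qI nq.
rewrite /Ihat mem_cat mem_take_idx // mem_predn; last first.
  by apply: contra I0; apply: mem_drop.
rewrite mem_drop_idx // ltnS.
case: (ltngtP i q) => h.
- rewrite andbT; have -> : (q.+1 < i.+1) = false by lia.
  by rewrite andbF orbF.
- rewrite andbF /=; have -> : (q.+1 < i.+1) = true by lia.
  by rewrite andbT.
- by subst i; rewrite (negbTE nq) ltnn andbF.
Qed.

Lemma memIk I q i : sorted ltn I -> 0 \notin I -> q.+1 \in I -> q \notin I -> q != 0 ->
  (i \in Ik I (index q.+1 I)) = if i < q then i \in I else if i == q then true else i.+1 \in I.
Proof.
move=> so I0 qI nq q0.
have D0 : 0 \notin drop (index q.+1 I).+1 I by apply: contra I0; apply: mem_drop.
rewrite /Ik mem_filter mem_cat mem_take_idx // drop_idx //= inE mem_predn //.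
rewrite mem_drop_idx // ltnS.
case: (eqVneq i 0) => [->|i0] /=.
  by rewrite lt0n q0 (negbTE I0).
case: (ltngtP i q) => h.
  rewrite andbT /=; have -> : (q.+1 < i.+1) = false by lia.
  by rewrite andbF orbF.
- rewrite andbF /=; have -> : (q.+1 < i.+1) = true by lia.
  by rewrite andbT.
- by rewrite orbT.
Qed.

Lemma all_pick (s : seq nat) q (P : pred nat) : q \in s ->
  all P s = all (fun i => (i == q) || P i) s && P q.
Proof.
move=> qs; apply/allP/andP => [H|[/allP H1 H2] i iS].
  by split; [apply/allP => i iS; rewrite H ?orbT | apply: H].
by case: (eqVneq i q) => [->//|ne]; have := H1 i iS; rewrite (negbTE ne).
Qed.

Lemma claimB I n q s b (J : seq nat) : all (fun j => j < n) I -> q < n ->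
  (forall i, (i \in J) = if i < q then i \in I else if i == q then b else i.+1 \in I) ->
  okS J n s = X I n q s && (b == desS n s q).
Proof.
move=> hI hq hJ; rewrite /okS.
have -> : all (fun j => j < n) J.
  apply/allP => i; rewrite hJ.
  case: ltnP => h1; first by lia.
  case: eqVneq => [->//|ne] h; have := allP hI _ h; lia.
have -> : all (fun i => (i \in J) == desS n s i) (iota 0 n) =
  all (fun i => (if i < q then i \in I else if i == q then b else i.+1 \in I) == desS n s i) (iota 0 n).
  by apply: eq_all => i; rewrite hJ.
rewrite andTb (@all_pick _ q); last by rewrite mem_iota; lia.
rewrite ltnn eqxx /X; congr (_ && _); apply: eq_all => i.
by case: (eqVneq i q) => //= ne; rewrite (negbTE ne).
Qed.

Lemma PermP n s : s \in Perm n -> size s = n /\ all (fun v => v < n) s.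
Proof.
rewrite mem_permutations => pm; split; first by rewrite (perm_size pm) size_iota.
by apply/allP => v; rewrite (perm_mem pm v) mem_iota.
Qed.

Lemma count_split (T : Type) (a b : pred T) s :
  count a s = count (fun x => a x && b x) s + count (fun x => a x && ~~ b x) s.
Proof. by elim: s => //= x s ->; case: (a x); case: (b x) => /=; lia. Qed.

Lemma count_q I n q : sorted ltn I -> 0 \notin I -> all (fun j => j < n) I -> q < n ->
  count (fun s => okS I n.+1 (ins q n s)) (Perm n) =
  if q.+1 \in Iprime I then
    d (Ihat I (index q.+1 I)) n + (if q == 0 then 0 else d (Ik I (index q.+1 I)) n)
  else 0.
Proof.
move=> so I0 hI hq.
rewrite (@eq_in_count _ _ (fun s => [&& q.+1 \in I, q \notin I & X I n q s])); last first.
  by move=> s /PermP [sz hs]; apply: claimA.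
rewrite /Iprime mem_filter /= andbC.
case: (boolP (q.+1 \in I)) => qI /=; last by apply/eqP; rewrite -leqn0 leqNgt -has_count; apply/hasPn.
case: (boolP (q \in I)) => nq /=; first by apply/eqP; rewrite -leqn0 leqNgt -has_count; apply/hasPn.
rewrite (count_split _ (fun s => desS n s q)) addnC !dE; congr (_ + _).
  apply: eq_count => s; rewrite (@claimB I n q s false) //.
  by move=> i; rewrite memIhat.
case: (eqVneq q 0) => [q0|q0].
  subst q; apply/eqP; rewrite -leqn0 leqNgt -has_count; apply/hasPn => s _.
  by rewrite /desS /= andbF.
apply: eq_count => s; rewrite (@claimB I n q s true) //.
by move=> i; rewrite memIk.
Qed.

Lemma path_last a (I : seq nat) : path ltn a I -> a <= last a I /\ {in I, forall x, x <= last a I}.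
Proof.
elim: I a => [|b I IH] a /=; first by split.
case/andP => ab /IH [h1 h2]; split; first by lia.
by move=> x; rewrite inE => /orP [/eqP ->|/h2].
Qed.

Lemma all_lt_last (I : seq nat) n : sorted ltn I -> last 0 I < n -> all (fun j => j < n) I.
Proof.
case: I => [//|a I] so hl; apply/allP => x.
have [h1 h2] := path_last so.
rewrite inE => /orP [/eqP ->|/h2] /=; move: hl => /=; lia.
Qed.

Lemma claimN I n s : all (fun j => j < n) I -> size s = n -> all (fun v => v < n) s ->
  okS I n.+1 (ins n n s) = okS I n s.
Proof.
move=> hI sz hs; rewrite /okS hI.
have -> : all (fun j => j < n.+1) I by apply/allP => j /(allP hI) h; apply: ltnW.
rewrite andTb iotaSr all_cat /= des_ins // ltnn eqxx.
have -> : (n \in I) = false by apply/negP => /(allP hI); rewrite ltnn.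
rewrite eqxx -[RHS]andbT; congr (_ && _); apply: eq_in_all => i; rewrite mem_iota => /andP [_ hi].
by rewrite des_ins //; [rewrite hi | lia].
Qed.

Lemma map_S_iota m n : map S (iota m n) = iota m.+1 n.
Proof. by elim: n m => //= n IH m; rewrite IH. Qed.

Theorem theorem2p4 (I : seq nat) (n : nat) :
  I != [::] -> sorted ltn I -> 0 \notin I -> last 0 I < n ->
  d I n.+1 =
    d I n
    + \sum_(k < size I | (nth 0 I k \in Iprime I) && (nth 0 I k != 1)) d (Ik I k) n
    + \sum_(k < size I | nth 0 I k \in Iprime I) d (Ihat I k) n.
Proof.
move=> _ so I0 hl.
have hI := all_lt_last so hl.
have u : uniq I by apply: (sorted_uniq ltn_trans ltnn).
pose H x := d (Ihat I (index x I)) n + (if x == 1 then 0 else d (Ik I (index x I)) n).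
rewrite dE count_ins big_ord_recr /=.
rewrite (@eq_in_count _ _ (okS I n)); last first.
  by move=> s /PermP [sz hs]; apply: claimN.
rewrite -dE addnC -addnA; congr (_ + _).
rewrite (@eq_bigr _ _ _ _ _ _ _ (fun q : 'I_n => if q.+1 \in Iprime I then H q.+1 else 0)); last first.
  move=> q _; rewrite count_q //=; rewrite /H eqSS //.
rewrite -big_mkcond /=.
rewrite -(big_mkord (fun i => i.+1 \in Iprime I) (fun i => H i.+1)).
rewrite /index_iota subn0 -(big_map S (fun x => x \in Iprime I) H) map_S_iota.
have pe : perm_eq [seq x <- iota 1 n | x \in Iprime I] [seq x <- I | x \in Iprime I].
  apply: uniq_perm; rewrite ?filter_uniq ?iota_uniq //.
  move=> x; rewrite !mem_filter; case xI : (x \in I); rewrite ?andbF ?andbT //.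
  rewrite mem_iota; have := allP hI x xI.
  have : x != 0 by apply: contra I0 => /eqP <-.
  move=> h1 h2; have -> : (1 <= x < 1 + n) = true by lia.
  by rewrite andbT.
rewrite -(big_filter _ (fun x => x \in Iprime I)) (perm_big _ pe) big_filter (big_nth 0) big_mkord.
rewrite big_mkcondr addnC -big_split /=.
apply: eq_bigr => k hk; rewrite /H index_uniq // addnC if_neg.
by rewrite addnC.
Qed.
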